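(* Let $k=6$, $p\in\mathbb{S}^n$ ($n\ge2$), $R\in(0,\pi/2)$, $B_R=\{q:\mathbf{d}_p(q)\le R\}$, $y\in\partial B_R$, and $\gamma:[R,\pi]\to\mathbb{S}^n$ the unit-speed minimizing geodesic from $y$ to $-p$ with $\mathbf{d}_p(\gamma(s))=s$. Let $h,f_1,f_2$ be smooth functions on $(R,\pi)$. Then the identity \[-15\sin R\,\langle\Psi_{\gamma(s)},\nabla\mathbf{d}_p\rangle\big|_x\,h(s)-3\cos R\,h(s)=\frac{d}{ds}\sum_{i=1}^2\frac{f_i(s)\sin^4s}{(1-\cos\mathbf{d}_x(\gamma(s)))^i}\] holding for all $x\in\partial B_R\setminus\{y\}$ and $s\in(R,\pi)$ is equivalent to the conditions that $h(s)=f_2(s)\sin^3s$ and $\boldsymbol f=(f_1,f_2)$ solves the system $\boldsymbol f'=A\boldsymbol f$, where \[A=\frac{1}{\sin s}\begin{pmatrix}-3\cos s&3\cos s\\ \cos R-\cos s&\cos s-\cos R\end{pmatrix}.\]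
   Context: $\mathbb{S}^n$ is the unit round sphere with Levi-Civita connection $\nabla$; $\mathbf{d}_q$ is geodesic distance from $q$. With $k=6$: $I_k(r)=\int_0^r\sin^{k-1}s\,ds$, $\varphi(t)=I_k(t)\sin^{1-k}t$ for $t\in(0,\pi)$, $\varphi(0)=0$, $\Phi_q=(\varphi\circ\mathbf{d}_q)\nabla\mathbf{d}_q$ on $\mathbb{S}^n\setminus\{-q\}$, and $\Psi_q:=\Phi_{-q}$ on $\mathbb{S}^n\setminus\{q\}$. *)

(* Defs.v *)
(* R : realType; the round sphere S^n is the set of
   unit vectors of the Euclidean space 'rV[R]_(n.+1) with the induced metric. *)
From HB Require Import structures.
From mathcomp Require Import all_boot all_order all_algebra.
From mathcomp Require Import all_classical all_reals all_analysis.
Set Implicit Arguments. Unset Strict Implicit. Unset Printing Implicit Defensive.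
Import Order.TTheory GRing.Theory Num.Theory.
Import numFieldNormedType.Exports.
Local Open Scope classical_set_scope.
Local Open Scope ring_scope.

Section Sphere.
Variable R : realType.

Definition dotv (m : nat) (u v : 'rV[R]_m) : R := \sum_(i < m) u 0 i * v 0 i.

Definition on_sphere (n : nat) (x : 'rV[R]_n.+1) : Prop := dotv x x = 1.

Definition gdist (n : nat) (q x : 'rV[R]_n.+1) : R := acos (dotv q x).

(* Riemannian gradient of d_q at x: the tangential projection
   v - <v,x> x of the ambient gradient v = - q / sqrt(1 - <q,x>^2)
   of x |-> acos <q,x>.  (Only meaningful for x <> +-q.) *)
Definition grad_dist (n : nat) (q x : 'rV[R]_n.+1) : 'rV[R]_n.+1 :=
  let v := (- (Num.sqrt (1 - dotv q x ^+ 2))^-1) *: q in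
  v - dotv v x *: x.

Definition Ik (k : nat) (r : R) : R :=
  Rintegral (@lebesgue_measure R) `[0, r] (fun s => sin s ^+ k.-1).

Definition phik (k : nat) (t : R) : R :=
  if t == 0 then 0 else Ik k t / sin t ^+ k.-1.

(* Phi_q = (phi o d_q) grad d_q on S^n \ {-q}; at x = q it is 0 since phi(0)=0 *)
Definition Phi (k n : nat) (q x : 'rV[R]_n.+1) : 'rV[R]_n.+1 :=
  if x == q then 0 else phik k (gdist q x) *: grad_dist q x.

Definition Psi (k n : nat) (q x : 'rV[R]_n.+1) : 'rV[R]_n.+1 := Phi k (- q) x.

Definition smooth_on (a b : R) (f : R -> R) : Prop :=
  forall (j : nat) (t : R), a < t < b -> derivable (derive1n j f) t 1.

End Sphere.

(* Main.v *)
Require Import Defs.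
From HB Require Import structures.
From mathcomp Require Import all_boot all_order all_algebra.
From mathcomp Require Import all_classical all_reals all_analysis.
From mathcomp Require Import lra ring zify.
Import Order.TTheory GRing.Theory Num.Theory.
Import numFieldNormedType.Exports.
Set Implicit Arguments. Unset Strict Implicit. Unset Printing Implicit Defensive.
Local Open Scope classical_set_scope.
Local Open Scope ring_scope.

Section Dot.
Variable R : realType.
Variable m : nat.
Implicit Types u v w : 'rV[R]_m.

Lemma dotvC u v : dotv u v = dotv v u.
Proof. by apply: eq_bigr => i _; rewrite mulrC. Qed.
Lemma dotvDl u v w : dotv (u + v) w = dotv u w + dotv v w.
Proof. by rewrite /dotv -big_split; apply: eq_bigr => i _; rewrite !mxE mulrDl. Qed.
Lemma dotvZl (k : R) u w : dotv (k *: u) w = k * dotv u w.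
Proof. by rewrite /dotv mulr_sumr; apply: eq_bigr => i _; rewrite !mxE mulrA. Qed.
Lemma dotvNl u w : dotv (- u) w = - dotv u w.
Proof. by rewrite -scaleN1r dotvZl mulN1r. Qed.
Lemma dotvBl u v w : dotv (u - v) w = dotv u w - dotv v w.
Proof. by rewrite dotvDl dotvNl. Qed.
Lemma dotvDr u v w : dotv w (u + v) = dotv w u + dotv w v.
Proof. by rewrite dotvC dotvDl !(dotvC w). Qed.
Lemma dotvZr (k : R) u w : dotv w (k *: u) = k * dotv w u.
Proof. by rewrite dotvC dotvZl dotvC. Qed.
Lemma dotvNr u w : dotv w (- u) = - dotv w u.
Proof. by rewrite dotvC dotvNl dotvC. Qed.
Lemma dotvBr u v w : dotv w (u - v) = dotv w u - dotv w v.
Proof. by rewrite dotvDr dotvNr. Qed.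
Lemma dotv0l w : dotv 0 w = 0.
Proof. by rewrite -(scale0r (0 : 'rV[R]_m)) dotvZl mul0r. Qed.
Lemma dotv0r w : dotv w 0 = 0.
Proof. by rewrite dotvC dotv0l. Qed.

Lemma dotv_ge0 u : 0 <= dotv u u.
Proof. by apply: sumr_ge0 => i _; rewrite -expr2 sqr_ge0. Qed.

Lemma dotv_eq0 u : dotv u u = 0 -> u = 0.
Proof.
move=> /eqP; rewrite psumr_eq0; last by move=> i _; rewrite -expr2 sqr_ge0.
move=> /allP H; apply/matrixP => i j; rewrite (ord1 i) mxE.
have := H j (mem_index_enum j); rewrite -expr2 sqrf_eq0 => /eqP //.
Qed.

Lemma dotv_gt0 u : u != 0 -> 0 < dotv u u.
Proof.
move=> u0; rewrite lt_def dotv_ge0 andbT; apply/eqP => /dotv_eq0 /eqP.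
by rewrite (negbTE u0).
Qed.

Lemma unit_dot_bound u v : dotv u u = 1 -> dotv v v = 1 -> -1 <= dotv u v <= 1.
Proof.
move=> hu hv.
have h1 := dotv_ge0 (u - v); have h2 := dotv_ge0 (u + v).
move: h1 h2; rewrite !dotvBl !dotvDl !dotvBr !dotvDr hu hv (dotvC v u) => h1 h2.
apply/andP; split; lra.
Qed.

Lemma unit_dot1 u v : dotv u u = 1 -> dotv v v = 1 -> dotv u v = 1 -> u = v.
Proof.
move=> hu hv huv; apply/eqP; rewrite -subr_eq0; apply/eqP/dotv_eq0.
rewrite !dotvBl !dotvBr hu hv (dotvC v u) huv; lra.
Qed.

Lemma unit_dotN1 u v : dotv u u = 1 -> dotv v v = 1 -> dotv u v = -1 -> u = - v.
Proof.
move=> hu hv huv; apply/eqP; rewrite -subr_eq0 opprK; apply/eqP/dotv_eq0.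
rewrite !dotvDl !dotvDr hu hv (dotvC v u) huv; lra.
Qed.

Lemma dotv_mx u v : dotv u v = (u *m v^T) 0 0.
Proof. by rewrite mxE; apply: eq_bigr => i _; rewrite mxE. Qed.

End Dot.

Lemma exists_orth (R : realType) (n : nat) (p y : 'rV[R]_n.+1) : (2 <= n)%N ->
  exists e : 'rV[R]_n.+1, [/\ dotv e e = 1, dotv e p = 0 & dotv e y = 0].
Proof.
move=> n2.
pose A := row_mx p^T y^T.
have rk : (0 < \rank (kermx A))%N.
  rewrite mxrank_ker; have := rank_leq_col A; rewrite /=; lia.
have : kermx A != 0 by rewrite -mxrank_eq0 -lt0n.
case/matrix0Pn => i [j Hij].
pose u := row i (kermx A).
have u0 : u != 0 by apply/matrix0Pn; exists 0, j; rewrite mxE.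
have uA : u *m A = 0 by rewrite -row_mul mulmx_ker row0.
move: uA; rewrite mul_mx_row => /eqP; rewrite row_mx_eq0 => /andP[/eqP up /eqP uy].
have dp : dotv u p = 0 by rewrite dotv_mx up mxE.
have dy : dotv u y = 0 by rewrite dotv_mx uy mxE.
have g := dotv_gt0 u0.
have sg : 0 < Num.sqrt (dotv u u) by rewrite sqrtr_gt0.
exists ((Num.sqrt (dotv u u))^-1 *: u); split.
- rewrite dotvZl dotvZr mulrA -expr2 exprVn sqr_sqrtr ?(ltW g) // mulVf //.
  by rewrite gt_eqF.
- by rewrite dotvZl dp mulr0.
- by rewrite dotvZl dy mulr0.
Qed.

Section S.
Variable R : realType.

Lemma is_derive_pow (n : nat) (g : R -> R) (x dg : R) : is_derive x 1 g dg ->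
  is_derive x 1 (fun u => g u ^+ n) (n%:R * g x ^+ n.-1 * dg).
Proof.
move=> H; have := @is_deriveX _ _ g n x 1 dg H; rewrite exprfctE.
by move=> H'; apply: is_derive_eq H' _; rewrite /GRing.scale /=.
Qed.

Lemma is_derive_cont (f df : R -> R) : (forall x : R, is_derive x (1:R) f (df x)) -> continuous f.
Proof.
move=> H x; apply: differentiable_continuous; rewrite -derivable1_diffP.
by case: (H x).
Qed.

Definition Fsin5 (t : R) : R := - cos t + 2/3 * cos t ^+ 3 - 1/5 * cos t ^+ 5.

Lemma Fsin5_derive (x : R) : is_derive x 1 Fsin5 (sin x ^+ 5).
Proof.
rewrite /Fsin5.
have h1 := is_derive_cos x.
have h3 := @is_derive_pow 3 cos x _ h1.
have h5 := @is_derive_pow 5 cos x _ h1.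
have := is_deriveB (is_deriveD (is_deriveN h1) (is_deriveZ (2/3) h3)) (is_deriveZ (1/5) h5).
move=> H; apply: is_derive_eq H _.
rewrite /GRing.scale /=.
have c2 : cos x ^+ 2 = 1 - sin x ^+ 2 by rewrite cos2sin2.
have -> : cos x ^+ 4 = (cos x ^+ 2) ^+ 2 by rewrite -exprM.
by rewrite c2; field.
Qed.

Lemma Ik6 (t : R) : 0 < t ->
  Ik 6 t = 8/15 - cos t + 2/3 * cos t ^+ 3 - 1/5 * cos t ^+ 5.
Proof.
move=> t0; rewrite /Ik /Rintegral /=.
have cF : continuous Fsin5 := @is_derive_cont Fsin5 (fun s => sin s ^+ 5) Fsin5_derive.
have cf : continuous (fun s : R => sin s ^+ 5).
  apply: (@is_derive_cont _ (fun s => 5%:R * sin s ^+ 4 * cos s)) => x.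
  exact: (@is_derive_pow 5 sin x _ (is_derive_sin x)).
rewrite (@continuous_FTC2 R (fun s => sin s ^+ 5) Fsin5 0 t t0).
- rewrite /= /Fsin5 cos0.
  by rewrite !expr1n; field.
- by apply: continuous_subspaceT => x; exact: cf.
- split.
  + by move=> x _; case: (Fsin5_derive x).
  + exact: cvg_at_right_filter (cF 0).
  + exact: cvg_at_left_filter (cF t).
- by move=> x _; rewrite derive1E; case: (Fsin5_derive x).
Qed.
End S.

Lemma dot_of_gdist (R : realType) n (q x : 'rV[R]_n.+1) t :
  on_sphere q -> on_sphere x -> gdist q x = t -> dotv q x = cos t.
Proof.
move=> hq hx <-; rewrite /gdist acosK //.
by rewrite in_itv /=; apply: unit_dot_bound.
Qed.

Section Alg.
Variable R : realFieldType.
Variables (a k s f1 f2 d1 d2 h : R).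

Definition Gp (c c' : R) : R :=
  d1 * s ^+ 4 / (1 - c) + f1 * (4 * s ^+ 3 * k) / (1 - c)
    + f1 * s ^+ 4 * c' / (1 - c) ^+ 2
    + d2 * s ^+ 4 / (1 - c) ^+ 2
    + f2 * (4 * s ^+ 3 * k) / (1 - c) ^+ 2
    + 2 * f2 * s ^+ 4 * c' / (1 - c) ^+ 3.

Definition Lv (c : R) : R :=
  - h * ((3 * c ^+ 2 - 9 * c + 8) * (c * a - k) / (1 - c) ^+ 3 + 3 * a).

Definition Qp (D : R) : R :=
  D ^+ 2 * (s * d1 + 3 * k * f1 - 3 * k * h / s ^+ 3)
  + D * (f1 * (k - a) + s * d2 + 2 * k * f2 - h * (3 * k - a) / s ^+ 3)
  + 2 * (k - a) * (f2 - h / s ^+ 3).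

Lemma alg_key c c' : s != 0 -> 1 - c != 0 -> c' * s = c * k - a ->
  Gp c c' - Lv c = s ^+ 3 / (1 - c) ^+ 3 * Qp (1 - c).
Proof.
move=> s0 c1 hc.
have -> : c' = (c * k - a) / s by rewrite -hc mulfK.
rewrite /Gp /Lv /Qp; field.
by rewrite s0 c1.
Qed.

Lemma alg_back c c' : s != 0 -> 1 - c != 0 -> c' * s = c * k - a ->
  h = f2 * s ^+ 3 -> d1 = (- 3 * k * f1 + 3 * k * f2) / s ->
  d2 = ((a - k) * f1 + (k - a) * f2) / s ->
  Gp c c' = Lv c.
Proof.
move=> s0 c1 hc hh h1 h2; apply/eqP; rewrite -subr_eq0; apply/eqP.
rewrite alg_key // /Qp hh h1 h2.
field; by rewrite s0.
Qed.

Lemma quad3 (q0 q1 q2 x1 x2 x3 : R) : x1 != x2 -> x1 != x3 -> x2 != x3 ->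
  q2 * x1 ^+ 2 + q1 * x1 + q0 = 0 ->
  q2 * x2 ^+ 2 + q1 * x2 + q0 = 0 ->
  q2 * x3 ^+ 2 + q1 * x3 + q0 = 0 -> [/\ q0 = 0, q1 = 0 & q2 = 0].
Proof.
move=> n12 n13 n23 e1 e2 e3.
have a12 : q2 * (x1 + x2) + q1 = 0.
  have : (x1 - x2) * (q2 * (x1 + x2) + q1) =
     (q2 * x1 ^+ 2 + q1 * x1 + q0) - (q2 * x2 ^+ 2 + q1 * x2 + q0) by ring.
  rewrite e1 e2 subrr => /eqP; rewrite mulf_eq0 subr_eq0 (negbTE n12) /= => /eqP //.
have a13 : q2 * (x1 + x3) + q1 = 0.
  have : (x1 - x3) * (q2 * (x1 + x3) + q1) =
     (q2 * x1 ^+ 2 + q1 * x1 + q0) - (q2 * x3 ^+ 2 + q1 * x3 + q0) by ring.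
  rewrite e1 e3 subrr => /eqP; rewrite mulf_eq0 subr_eq0 (negbTE n13) /= => /eqP //.
have hq2 : q2 = 0.
  have : (x2 - x3) * q2 = (q2 * (x1 + x2) + q1) - (q2 * (x1 + x3) + q1) by ring.
  rewrite a12 a13 subrr => /eqP; rewrite mulf_eq0 subr_eq0 (negbTE n23) /= => /eqP //.
have hq1 : q1 = 0 by move: a12; rewrite hq2 mul0r add0r.
by split => //; move: e1; rewrite hq1 hq2 !mul0r !add0r.
Qed.

Lemma alg_fwd (c1 c2 c3 : R) (g : R -> R) : s != 0 -> k != a ->
  (forall c, c \in [:: c1; c2; c3] -> 1 - c != 0 /\ g c * s = c * k - a /\ Gp c (g c) = Lv c) ->
  c1 != c2 -> c1 != c3 -> c2 != c3 ->
  [/\ h = f2 * s ^+ 3, d1 = (- 3 * k * f1 + 3 * k * f2) / s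
    & d2 = ((a - k) * f1 + (k - a) * f2) / s].
Proof.
move=> s0 ka H n12 n13 n23.
have hQ : forall c, c \in [:: c1; c2; c3] -> Qp (1 - c) = 0.
  move=> c cin; have [hc1 [hc hG]] := H c cin.
  have := alg_key s0 hc1 hc; rewrite hG subrr => /esym/eqP.
  rewrite mulf_eq0 => /orP[|/eqP //].
  by rewrite mulf_eq0 invr_eq0 !expf_eq0 /= (negbTE s0) (negbTE hc1).
have e1 := hQ c1 (mem_head _ _).
have e2 : Qp (1 - c2) = 0 by apply: hQ; rewrite !inE eqxx orbT.
have e3 : Qp (1 - c3) = 0 by apply: hQ; rewrite !inE eqxx !orbT.
have nD : forall u v : R, u != v -> 1 - u != 1 - v.
  by move=> u v; apply: contra => /eqP e; apply/eqP; rewrite -(opprK u) -(opprK v); congr (- _); apply: (addrI 1).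
have Qf : forall D, Qp D = (s * d1 + 3 * k * f1 - 3 * k * h / s ^+ 3) * D ^+ 2
  + (f1 * (k - a) + s * d2 + 2 * k * f2 - h * (3 * k - a) / s ^+ 3) * D
  + 2 * (k - a) * (f2 - h / s ^+ 3) by move=> D; rewrite /Qp; ring.
rewrite !Qf in e1 e2 e3.
have [q0 q1 q2] := quad3 (nD _ _ n12) (nD _ _ n13) (nD _ _ n23) e1 e2 e3.
have hf2 : f2 = h / s ^+ 3.
  move/eqP: q0; rewrite mulf_eq0 subr_eq0 => /orP[|/eqP //].
  by rewrite mulf_eq0 subr_eq0 (negbTE ka) pnatr_eq0.
have hh : h = f2 * s ^+ 3 by rewrite hf2 divfK // expf_neq0.
split => //.
- have E : s * d1 = 3 * k * f2 - 3 * k * f1.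
    by apply/eqP; rewrite -subr_eq0; apply/eqP; rewrite -q2 hf2; ring.
  rewrite (_ : -3 * k * f1 + 3 * k * f2 = s * d1); first by field.
  by rewrite E; ring.
- have E : s * d2 = (a - k) * f1 + (k - a) * f2.
    by apply/eqP; rewrite -subr_eq0; apply/eqP; rewrite -q1 hf2; ring.
  by rewrite -E; field.
Qed.
End Alg.

Section Geo.
Variable R : realType.
Variable n : nat.
Variables (p y : 'rV[R]_n.+1) (r : R) (gamma : R -> 'rV[R]_n.+1).
Hypothesis hp : on_sphere p.
Hypothesis hr : 0 < r < pi / 2.
Hypothesis hy : on_sphere y.
Hypothesis hpy : gdist p y = r.
Hypothesis hgs : forall s, r <= s <= pi -> on_sphere (gamma s).
Hypothesis hgr : gamma r = y.
Hypothesis hdist : forall s t, r <= s <= pi -> r <= t <= pi ->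
     gdist (gamma s) (gamma t) = `|s - t|.
Hypothesis hdp : forall s, r <= s <= pi -> gdist p (gamma s) = s.

Let a := cos r.
Let sR := sin r.
Definition e1 := sR^-1 *: (y - a *: p).

Lemma sR_gt0 : 0 < sR.
Proof.
apply: sin_gt0_pihalf; case/andP: hr => h1 h2; apply/andP; split => //.
Qed.

Lemma sR2 : sR ^+ 2 = 1 - a ^+ 2.
Proof. by rewrite /sR /a sin2cos2. Qed.

Lemma dpy : dotv p y = a.
Proof. exact: dot_of_gdist. Qed.

Lemma dpp : dotv p p = 1. Proof. exact: hp. Qed.
Lemma dyy : dotv y y = 1. Proof. exact: hy. Qed.

Lemma dpe1 : dotv p e1 = 0.
Proof.
rewrite /e1 dotvZr dotvBr dotvZr dpy dpp; lra.
Qed.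

Lemma de1e1 : dotv e1 e1 = 1.
Proof.
have s0 := sR_gt0.
rewrite /e1 dotvZr dotvZl !dotvBr !dotvBl !dotvZr !dotvZl (dotvC y p) dpy dpp dyy.
have -> : 1 - a * a - (a * a - a * (a * 1)) = sR ^+ 2 by rewrite sR2; ring.
by field; rewrite gt_eqF.
Qed.

Lemma dye1 : dotv y e1 = sR.
Proof.
have s0 := sR_gt0.
rewrite /e1 dotvZr dotvBr dotvZr dyy (dotvC y p) dpy.
have -> : 1 - a * a = sR ^+ 2 by rewrite sR2; ring.
by field; rewrite gt_eqF.
Qed.

Lemma gamma_eq u : r <= u <= pi -> gamma u = cos u *: p + sin u *: e1.
Proof.
move=> hu.
have s0 := sR_gt0.
have hrr : r <= r <= pi.
  case/andP: hr => h1 h2; rewrite lexx /=; apply: ltW; apply: (lt_trans h2).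
  by rewrite ltr_pdivrMr // ltr_pMr ?pi_gt0 // ltr1n.
have g1 : dotv p (gamma u) = cos u by apply: dot_of_gdist => //; [exact: hgs | exact: hdp].
have g2 : dotv (gamma u) y = cos (u - r).
  apply: dot_of_gdist => //; first exact: hgs.
  rewrite -hgr hdist // ger0_norm // subr_ge0; by case/andP: hu.
have g3 : dotv (gamma u) e1 = sin u.
  rewrite /e1 dotvZr dotvBr dotvZr g2 (dotvC _ p) g1 cosB /sR /a.
  by field; rewrite gt_eqF.
have gg : dotv (gamma u) (gamma u) = 1 by apply: hgs.
have h1 := dpe1; have h2 := de1e1.
move: g3 h1 h2; generalize e1 => E g3 h1 h2.
apply/eqP; rewrite -subr_eq0; apply/eqP/dotv_eq0.
rewrite !dotvBl !dotvBr !dotvDl !dotvDr !dotvZl !dotvZr.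
rewrite gg g3 (dotvC _ p) g1 (dotvC E) g3 (dotvC E p) h1 dpp h2.
have hs := sin2cos2 u.
rewrite !mulr1 !mulr0 -[sin u * sin u]expr2 hs; ring.
Qed.


Lemma dx_gamma x u : r <= u <= pi ->
  dotv x (gamma u) = cos u * dotv x p + sin u * dotv x e1.
Proof. by move=> hu; rewrite gamma_eq // dotvDr !dotvZr. Qed.

Lemma dpx x : on_sphere x -> gdist p x = r -> dotv p x = a.
Proof. by move=> hx hxr; apply: dot_of_gdist. Qed.

Lemma oo_cc u : r < u < pi -> r <= u <= pi.
Proof. by case/andP => h1 h2; rewrite !ltW. Qed.

Lemma c_ne1 x s : on_sphere x -> gdist p x = r -> r < s < pi ->
  dotv x (gamma s) != 1.
Proof.
move=> hx hxr hs; apply/eqP => h.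
have e := unit_dot1 hx (hgs (oo_cc hs)) h.
move: hxr; rewrite e hdp ?oo_cc // => es; move: hs; rewrite es ltxx //.
Qed.

Lemma F_derive x s (f1 f2 : R -> R) :
  on_sphere x -> gdist p x = r -> r < s < pi ->
  derivable f1 s 1 -> derivable f2 s 1 ->
  let b := dotv x e1 in
  let c := a * cos s + b * sin s in
  let c' := - a * sin s + b * cos s in
  is_derive s (1 : R)
       (fun u => f1 u * sin u ^+ 4 / (1 - cos (gdist x (gamma u)))
               + f2 u * sin u ^+ 4 / (1 - cos (gdist x (gamma u))) ^+ 2)
   (derive1 f1 s * sin s ^+ 4 / (1 - c) + f1 s * (4 * sin s ^+ 3 * cos s) / (1 - c)
    + f1 s * sin s ^+ 4 * c' / (1 - c) ^+ 2
    + derive1 f2 s * sin s ^+ 4 / (1 - c) ^+ 2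
    + f2 s * (4 * sin s ^+ 3 * cos s) / (1 - c) ^+ 2
    + 2 * f2 s * sin s ^+ 4 * c' / (1 - c) ^+ 3).
Proof.
move=> hx hxr hs d1 d2 b c c'.
have xp : dotv x p = a by rewrite dotvC; apply: dpx.
have hc : dotv x (gamma s) = c by rewrite dx_gamma ?oo_cc // xp /c /b; ring.
have c1 : 1 - c != 0 by rewrite subr_eq0 eq_sym -hc c_ne1.
pose D u := 1 - (a * cos u + b * sin u).
have hD : is_derive s (1:R) D (- c').
  have := is_deriveB (@is_derive_cst _ R^o R^o (1:R) s (1:R))
     (is_deriveD (is_deriveZ a (is_derive_cos s)) (is_deriveZ b (is_derive_sin s))).
  move=> H; apply: is_derive_eq H _; rewrite /c' /GRing.scale /=; ring.
have Ds : D s = 1 - c by [].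
have hDV : is_derive s (1:R) (fun u => (D u)^-1) (- (D s) ^- 2 *: (- c')).
  by apply: is_deriveV => //; rewrite Ds.
have hD2 : is_derive s (1:R) (fun u => D u ^+ 2) (2%:R * D s ^+ 1 * (- c')).
  exact: (@is_derive_pow _ 2 D s _ hD).
have hD2V : is_derive s (1:R) (fun u => (D u ^+ 2)^-1)
    (- (D s ^+ 2) ^- 2 *: (2%:R * D s ^+ 1 * (- c'))).
  by apply: is_deriveV => //; rewrite Ds expf_neq0.
have hs4 : is_derive s (1:R) (fun u => sin u ^+ 4) (4%:R * sin s ^+ 3 * cos s).
  exact: (@is_derive_pow _ 4 sin s _ (is_derive_sin s)).
have hf1 : is_derive s (1:R) f1 (derive1 f1 s) by rewrite derive1E; exact: derivableP.
have hf2 : is_derive s (1:R) f2 (derive1 f2 s) by rewrite derive1E; exact: derivableP.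
have hA := is_deriveM (is_deriveM hf1 hs4) hDV.
have hB := is_deriveM (is_deriveM hf2 hs4) hD2V.
have hAB := is_deriveD hA hB.
have hG : is_derive s (1:R)
   (fun u => f1 u * sin u ^+ 4 / D u + f2 u * sin u ^+ 4 / D u ^+ 2)
   (derive1 f1 s * sin s ^+ 4 / (1 - c) + f1 s * (4 * sin s ^+ 3 * cos s) / (1 - c)
    + f1 s * sin s ^+ 4 * c' / (1 - c) ^+ 2
    + derive1 f2 s * sin s ^+ 4 / (1 - c) ^+ 2
    + f2 s * (4 * sin s ^+ 3 * cos s) / (1 - c) ^+ 2
    + 2 * f2 s * sin s ^+ 4 * c' / (1 - c) ^+ 3).
  have -> : (fun u => f1 u * sin u ^+ 4 / D u + f2 u * sin u ^+ 4 / D u ^+ 2) =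
    (f1 * (fun u : R => sin u ^+ 4) * (fun u : R => (D u)^-1) +
       f2 * (fun u : R => sin u ^+ 4) * (fun u : R => (D u ^+ 2)^-1)) by apply/funext => u.
  refine (is_derive_eq hAB _).
  rewrite /GRing.scale /= Ds.
  have -> : (f1 * (fun u : R => sin u ^+ 4)) s = f1 s * sin s ^+ 4 by [].
  have -> : (f2 * (fun u : R => sin u ^+ 4)) s = f2 s * sin s ^+ 4 by [].
  by field.
apply: (near_eq_is_derive _ hG).
have sin_ : s \in `]r, pi[ by rewrite in_itv.
apply: filterS (near_in_itvoo sin_) => u; rewrite in_itv /= => hu.
have -> : cos (gdist x (gamma u)) = a * cos u + b * sin u.
  rewrite /gdist acosK; first by rewrite dx_gamma ?oo_cc // xp /b mulrC [sin u * _]mulrC.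
  by rewrite in_itv /=; apply: unit_dot_bound => //; apply: hgs; apply: oo_cc.
by [].
Qed.

Lemma LHS_val x s (H : R) : on_sphere x -> gdist p x = r -> r < s < pi ->
  let c := dotv x (gamma s) in
  - 15 * sin r * dotv (Psi 6 (gamma s) x) (grad_dist p x) * H - 3 * cos r * H
   = - H * ((3 * c ^+ 2 - 9 * c + 8) * (c * cos r - cos s) / (1 - c) ^+ 3 + 3 * cos r).
Proof.
move=> hx hxr hs c.
have cE : c = dotv x (gamma s) by [].
clearbody c.
have s0 := sR_gt0.
have hgs' := hgs (oo_cc hs).
have gg : dotv (gamma s) (gamma s) = 1 := hgs'.
have xx : dotv x x = 1 := hx.
have xp : dotv x p = a by rewrite dotvC; apply: dpx.
have pg : dotv p (gamma s) = cos s by apply: dot_of_gdist => //; apply: hdp; apply: oo_cc.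
have c1 : 1 - c != 0 by rewrite subr_eq0 eq_sym cE c_ne1.
rewrite /Psi /Phi; case: eqP => [xg|xg].
  have cm1 : c = -1 by rewrite cE xg dotvNl gg.
  have ka : cos s = - a by rewrite -pg -xp xg dotvNl dotvC opprK.
  rewrite dotv0l; rewrite cE in cm1; clear c1; subst c; rewrite cm1 ka /a; field.
  done.
have cN1 : c != -1.
  apply/eqP => h; apply: xg; rewrite cE in h; exact: (unit_dotN1 hx hgs' h).
have cb := unit_dot_bound hx hgs'; rewrite -cE in cb.
have cgt : -1 < c by rewrite lt_neqAle eq_sym cN1; case/andP: cb.
have clt : c < 1 by rewrite lt_neqAle cE c_ne1 //= -cE; case/andP: cb.
have dgx : dotv (- gamma s) x = - c by rewrite dotvNl dotvC cE.
set t := gdist (- gamma s) x.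
have tE : t = acos (- c) by rewrite /t /gdist dgx.
have t0 : 0 < t by rewrite tE; apply: acos_gt0; apply/andP; split; lra.
rewrite /phik (negbTE (lt0r_neq0 t0)) Ik6 //=.
have ct : cos t = - c by rewrite tE acosK // in_itv /=; apply/andP; split; lra.
set S := Num.sqrt (1 - c ^+ 2).
have st : sin t = S by rewrite tE sin_acos ?sqrrN //; apply/andP; split; lra.
have S0 : 0 < S by rewrite sqrtr_gt0; nra.
have S2 : S ^+ 2 = 1 - c ^+ 2 by rewrite sqr_sqrtr //; nra.
have sRE : Num.sqrt (1 - dotv p x ^+ 2) = sR.
  by rewrite dpx // -sR2 sqrtr_sqr ger0_norm // ltW.
rewrite ct st /grad_dist dgx sRE sqrrN -/S.
rewrite !dotvZl !dotvBl !dotvBr !dotvZl !dotvZr ?dotvNl ?dotvNr.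
rewrite (dotvC (gamma s) x) -cE (dotvC (gamma s) p) pg xx xp dpx //.
have S6 : S ^+ 6 = (1 - c ^+ 2) ^+ 3 by rewrite -S2 -exprM.
have E : forall Y : R, - S^-1 * (- sR^-1 * - cos s) - - S^-1 * (- sR^-1 * a * - c) -
    (- S^-1 * - c * (- sR^-1 * a) - - S^-1 * - c * (- sR^-1 * a * 1)) =
    - S^-1 * sR^-1 * (cos s - a * c) by move=> _; ring.
rewrite (E 0).
have hT : forall I X : R, I / S ^+ 5 * (- S^-1 * sR^-1 * X) =
   - I * X * sR^-1 / (1 - c ^+ 2) ^+ 3.
  by move=> I X; rewrite -S6; field; rewrite !gt_eqF.
rewrite hT /sR /a.
have c2 : 1 + c != 0 by apply: contra cN1 => /eqP h; apply/eqP; rewrite -[c](addKr 1) h addr0.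
field.
have -> : 1 - c ^+ 2 = (1 - c) * (1 + c) by ring.
by rewrite c1 mulf_neq0 // gt_eqF.
Qed.


Lemma make_x (e2 : 'rV[R]_n.+1) (al be : R) :
  dotv e2 e2 = 1 -> dotv e2 p = 0 -> dotv e2 y = 0 ->
  al ^+ 2 + be ^+ 2 = 1 -> al != 1 ->
  let x := a *: p + sR *: (al *: e1 + be *: e2) in
  [/\ on_sphere x, gdist p x = r, x <> y & dotv x e1 = sR * al].
Proof.
move=> e22 e2p e2y hab al1 x.
have s0 := sR_gt0.
have e2e1 : dotv e2 e1 = 0.
  by rewrite /e1 dotvZr dotvBr dotvZr e2p e2y; rewrite mulr0 subrr mulr0.
rewrite {}/x.
move: (dpe1) (de1e1) (dye1) e2e1; generalize e1 => E h1 h2 hy1 e2e1.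
have xe1 : dotv (a *: p + sR *: (al *: E + be *: e2)) E = sR * al.
  rewrite dotvDl !dotvZl dotvDl !dotvZl h1 h2 e2e1; ring.
have xp : dotv p (a *: p + sR *: (al *: E + be *: e2)) = a.
  rewrite dotvDr !dotvZr dotvDr !dotvZr dpp h1 (dotvC p e2) e2p; ring.
split => //.
- rewrite /on_sphere !dotvDl !dotvZl !dotvDr !dotvZr !dotvDl !dotvZl !dotvDr !dotvZr.
  rewrite dpp h1 h2 e22 (dotvC p e2) e2p (dotvC E p) h1 (dotvC E e2) e2e1.
  have := sR2; rewrite /sR /a => hs.
  transitivity (cos r ^+ 2 + sin r ^+ 2 * (al ^+ 2 + be ^+ 2)); first ring.
  by rewrite hab mulr1 hs; ring.
- rewrite /gdist xp /a cosK // in_itv /=; case/andP: hr => h3 h4.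
  rewrite ltW //= ltW // (lt_trans h4) // ltr_pdivrMr // ltr_pMr ?pi_gt0 // ltr1n //.
- move=> xy; move: xe1; rewrite xy hy1 => /eqP.
  rewrite -subr_eq0 -{1}(mulr1 sR) -mulrBr mulf_eq0 (gt_eqF s0) /= subr_eq0 eq_sym.
  by rewrite (negbTE al1).
Qed.

End Geo.

Lemma is_derive_uniq (R : realType) (F : R -> R) (s v1 v2 : R) :
  is_derive s (1:R) F v1 -> is_derive s (1:R) F v2 -> v1 = v2.
Proof. by case=> _ <-; case=> _ <-. Qed.

Unset Implicit Arguments.

Theorem lemma3p3 (R : realType) (n : nat) (p y : 'rV[R]_n.+1) (r : R)
  (gamma : R -> 'rV[R]_n.+1) (h f1 f2 : R -> R) :
  (2 <= n)%N ->
  on_sphere p ->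
  0 < r < pi / 2 ->
  on_sphere y -> gdist p y = r ->
  (* gamma : [r, pi] -> S^n is the unit-speed minimizing geodesic from y to -p *)
  (forall s, r <= s <= pi -> on_sphere (gamma s)) ->
  gamma r = y -> gamma pi = - p ->
  (forall s t, r <= s <= pi -> r <= t <= pi ->
     gdist (gamma s) (gamma t) = `|s - t|) ->
  (forall s, r <= s <= pi -> gdist p (gamma s) = s) ->
  smooth_on r pi h -> smooth_on r pi f1 -> smooth_on r pi f2 ->
  (forall x s, on_sphere x -> gdist p x = r -> x <> y -> r < s < pi ->
     is_derive s (1 : R)
       (fun u => f1 u * sin u ^+ 4 / (1 - cos (gdist x (gamma u)))
               + f2 u * sin u ^+ 4 / (1 - cos (gdist x (gamma u))) ^+ 2)
       (- 15 * sin r * dotv (Psi 6 (gamma s) x) (grad_dist p x) * h s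
        - 3 * cos r * h s))
  <->
  (forall s, r < s < pi ->
     [/\ h s = f2 s * sin s ^+ 3,
         derive1 f1 s = (- 3 * cos s * f1 s + 3 * cos s * f2 s) / sin s
       & derive1 f2 s = ((cos r - cos s) * f1 s + (cos s - cos r) * f2 s) / sin s]).
Proof.
move=> n2 hp hr hy hpy hgs hgr hgpi hdist hdp sh s1 s2.
have FD := F_derive hp hr hy hpy hgs hgr hdist hdp.
have LV := LHS_val hp hr hgs hdp.
have MX := make_x hp hr hy hpy.
have DX := dx_gamma hp hr hy hpy hgs hgr hdist hdp.
have CN := c_ne1 hgs hdp.
have xp : forall x, on_sphere x -> gdist p x = r -> dotv x p = cos r.
  by move=> x hx hxr; rewrite dotvC; apply: dot_of_gdist.
set E1 := e1 p y r.
have sR0 : 0 < sin r by apply: sin_gt0_pihalf; case/andP: hr => ->.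
have sin0 : forall s, r < s < pi -> 0 < sin s.
  move=> s /andP[h1 h2]; apply: sin_gt0_pi; rewrite h2 andbT.
  by case/andP: hr => h3 _; apply: lt_trans h1.
split.
- move=> Hid s hs.
  have d1 : derivable f1 s 1 := s1 0%N s hs.
  have d2 : derivable f2 s 1 := s2 0%N s hs.
  have [e2 [e22 e2p e2y]] := exists_orth p y n2.
  have ss0 := sin0 s hs.
  pose g : R -> R := fun c => - cos r * sin s + (c - cos r * cos s) / sin s * cos s.
  have key : forall al be, al ^+ 2 + be ^+ 2 = 1 -> al != 1 ->
      let c := cos r * cos s + sin r * al * sin s in
      [/\ 1 - c != 0, g c * sin s = c * cos s - cos r &
        Gp (cos s) (sin s) (f1 s) (f2 s) (derive1 f1 s) (derive1 f2 s) c (g c)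
        = Lv (cos r) (cos s) (h s) c].
    move=> al be hab al1 c.
    have [hx hxr hxy hxe] := MX e2 al be e22 e2p e2y hab al1.
    set x := (X in on_sphere X) in hx hxr hxy hxe.
    have cE : dotv x (gamma s) = c.
      by rewrite DX ?oo_cc // xp // -/E1 hxe /c; ring.
    have c1 : 1 - c != 0 by rewrite subr_eq0 eq_sym -cE CN.
    have gc : g c = - cos r * sin s + sin r * al * cos s.
      rewrite /g /c; rewrite addrC [RHS]addrC; congr (_ + _); rewrite addrC addKr mulfK // gt_eqF //.
    split => //.
      rewrite /g; have := sin2cos2 s => hs2.
      rewrite mulrDl (mulrAC _ (cos s)) divfK ?gt_eqF // -mulrA -expr2 hs2; ring.
    have H1 := Hid x s hx hxr hxy hs.
    have H2 := FD x s f1 f2 hx hxr hs d1 d2.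
    move: H2; rewrite /= hxe => H2.
    have E := is_derive_uniq H2 H1.
    rewrite (LV x s (h s) hx hxr hs) /= cE in E.
    rewrite gc /Gp /Lv -E /c; ring.
  have kne : cos s != cos r.
    apply/eqP => e; have ck := @cosK R.
    have : acos (cos s) = acos (cos r) by rewrite e.
    case/andP: hr => hr1 hr2.
    have rpi : r < pi.
      apply: (lt_trans hr2); rewrite ltr_pdivrMr // ltr_pMr ?pi_gt0 // ltr1n //.
    rewrite !ck ?in_itv /=.
    - by move=> ee; move: hs; rewrite ee ltxx.
    - by rewrite !ltW.
    - by case/andP: hs => h1 h2; rewrite !ltW // (lt_trans hr1 h1).
  pose cc (al : R) := cos r * cos s + sin r * al * sin s.
  have dist : forall al be : R, al != be -> cc al != cc be.
    move=> al be; apply: contra => /eqP e; apply/eqP.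
    have : sin r * sin s * (al - be) = cc al - cc be by rewrite /cc; ring.
    rewrite e subrr => /eqP; rewrite !mulf_eq0 (gt_eqF sR0) (gt_eqF ss0) /= subr_eq0 => /eqP //.
  have h01 : (0:R) ^+ 2 + 1 ^+ 2 = 1 by rewrite expr0n add0r expr1n.
  have n01 : (0:R) != 1 by rewrite eq_sym oner_neq0.
  have h02 : (3/5:R) ^+ 2 + (4/5) ^+ 2 = 1 by field.
  have n02 : (3/5:R) != 1 by rewrite lt_eqF //; lra.
  have h03 : (-(3/5):R) ^+ 2 + (4/5) ^+ 2 = 1 by field.
  have n03 : (-(3/5):R) != 1 by rewrite lt_eqF //; lra.
  have [a1 b1 c1] := key 0 1 h01 n01.
  have [a2 b2 c2] := key (3/5) (4/5) h02 n02.
  have [a3 b3 c3] := key (-(3/5)) (4/5) h03 n03.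
  have m12 : cc 0 != cc (3/5) by apply: dist; rewrite lt_eqF //; lra.
  have m13 : cc 0 != cc (-(3/5)) by apply: dist; rewrite gt_eqF //; lra.
  have m23 : cc (3/5) != cc (-(3/5)) by apply: dist; rewrite gt_eqF //; lra.
  have := @alg_fwd R (cos r) (cos s) (sin s) (f1 s) (f2 s) (derive1 f1 s) (derive1 f2 s) (h s)
     (cc 0) (cc (3/5)) (cc (-(3/5))) g (lt0r_neq0 ss0) kne.
  case.
  - move=> c; rewrite !inE => /orP[/eqP ->|/orP[/eqP ->|/eqP ->]]; rewrite /cc; by split.
  - exact: m12.
  - exact: m13.
  - exact: m23.
  - move=> -> -> ->; split => //.
  
- move=> Hode x s hx hxr hxy hs.
  have d1 : derivable f1 s 1 := s1 0%N s hs.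
  have d2 : derivable f2 s 1 := s2 0%N s hs.
  have ss0 := sin0 s hs.
  have H2 := FD x s f1 f2 hx hxr hs d1 d2.
  move: H2; rewrite /= => H2.
  apply: (is_derive_eq H2).
  rewrite (LV x s (h s) hx hxr hs) /=.
  have cE : dotv x (gamma s) = cos r * cos s + dotv x E1 * sin s.
    by rewrite DX ?oo_cc // xp //; ring.
  rewrite cE.
  have c1 : 1 - (cos r * cos s + dotv x E1 * sin s) != 0.
    by rewrite subr_eq0 eq_sym -cE CN.
  have hc' : (- cos r * sin s + dotv x E1 * cos s) * sin s =
      (cos r * cos s + dotv x E1 * sin s) * cos s - cos r.
    have := sin2cos2 s => hs2.
    transitivity (- cos r * sin s ^+ 2 + dotv x E1 * cos s * sin s); first ring.
    rewrite hs2; ring.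
  have [hh hd1 hd2] := Hode s hs.
  have := alg_back (lt0r_neq0 ss0) c1 hc' hh hd1 hd2.
  by rewrite /Gp /Lv.
Qed.
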